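(* Let $d\ge1$, $\sigma>0$ with $1<\sigma d<2$, and $a>0$. Then there is no nontrivial solution $Q$ of $$Q''+\frac{d-1}{\rho}Q'-Q+ia\left(\frac{1}{\sigma}Q+\rho Q'\right)+|Q|^{2\sigma}Q=0,\ \ 0<\rho<\infty,\qquad Q'(0)=0,$$ such that $Q(\rho)\sim c_1\rho^{-i/a-1/\sigma}$ as $\rho\to\infty$ for some $c_1\in\mathbb{C}$ (i.e., in the large-$\rho$ asymptotic decomposition $Q\sim c_1Q_1+c_2Q_2$ with $Q_1\sim\rho^{-i/a-1/\sigma}$ and $Q_2\sim e^{-ia\rho^2/2}\rho^{i/a-d+1/\sigma}$, one always has $c_2\neq0$). *)

(* Defs.v *)
From Stdlib Require Import Reals.
From Coquelicot Require Import Coquelicot.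
Open Scope R_scope.

Definition rpow_nn (x y : R) : R := if Rlt_dec 0 x then Rpower x y else 0.

Definition abs_pow (z : C) (s : R) : R := rpow_nn (Cmod z) (2 * s).

(* rho^(i/a + 1/sigma) = rho^(1/sigma) * exp(i ln(rho)/a), for rho > 0;
   this is 1 / Q_1(rho) where Q_1(rho) = rho^(-i/a - 1/sigma). *)
Definition inv_Q1 (a s rho : R) : C :=
  Cmult (RtoC (Rpower rho (1 / s)))
        (cos (ln rho / a), sin (ln rho / a)).

(* Main.v *)
Require Import Defs.
From Stdlib Require Import Reals Lra Lia.
From Coquelicot Require Import Coquelicot.
Open Scope R_scope.
Lemma H_deriv m s a (u v u1 v1 u2 v2 P : R -> R) t : 0 < t ->
  is_derive u t (u1 t) -> is_derive v t (v1 t) ->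
  is_derive u1 t (u2 t) -> is_derive v1 t (v2 t) ->
  u2 t + INR m / t * u1 t - u t - a*(s * v t + t * v1 t) + P t * u t = 0 ->
  v2 t + INR m / t * v1 t - v t + a*(s * u t + t * u1 t) + P t * v t = 0 ->
  is_derive (fun t => t^m*(v1 t*u t - u1 t*v t) + a*(t*t^m)*(u t^2+v t^2)/2) t
    (a*((INR m+1)/2 - s)*t^m*(u t^2+v t^2)).
Proof.
  intros Ht Du Dv Du1 Dv1 E1 E2.
  assert (L: is_derive (fun t => t^m*(v1 t*u t - u1 t*v t) + a*(t*t^m)*(u t^2+v t^2)/2) t
   (INR m * t^(pred m) * (v1 t*u t - u1 t*v t) + t^m*(v2 t*u t + v1 t * u1 t - u2 t * v t - u1 t * v1 t)
    + a*(t^m + t*(INR m * t^(pred m))) * (u t^2+v t^2)/2 + a*(t*t^m)*(2*u t*u1 t + 2* v t * v1 t)/2)).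
  { auto_derive.
    - repeat split; eexists; eassumption.
    - assert (D1: Derive (fun x => u x) t = u1 t) by (apply is_derive_unique; exact Du).
      assert (D2: Derive (fun x => v x) t = v1 t) by (apply is_derive_unique; exact Dv).
      assert (D3: Derive (fun x => u1 x) t = u2 t) by (apply is_derive_unique; exact Du1).
      assert (D4: Derive (fun x => v1 x) t = v2 t) by (apply is_derive_unique; exact Dv1).
      rewrite D1, D2, D3, D4.
      simpl pow. match goal with |- ?A = ?B => change (@eq R A B) end. field. }
  eapply is_derive_ext; [intros; reflexivity|].
  replace (a*((INR m+1)/2 - s)*t^m*(u t^2+v t^2)) with
   (INR m * t^(pred m) * (v1 t*u t - u1 t*v t) + t^m*(v2 t*u t + v1 t * u1 t - u2 t * v t - u1 t * v1 t)
    + a*(t^m + t*(INR m * t^(pred m))) * (u t^2+v t^2)/2 + a*(t*t^m)*(2*u t*u1 t + 2* v t * v1 t)/2).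
  exact L.
  assert (U2 : u2 t = - (INR m / t * u1 t) + u t + a*(s * v t + t * v1 t) - P t * u t) by lra.
  assert (V2 : v2 t = - (INR m / t * v1 t) + v t - a*(s * u t + t * u1 t) - P t * v t) by lra.
  rewrite U2, V2.
  destruct m as [|k].
  - simpl. field. lra.
  - simpl pred. simpl pow. field. lra.
Qed.
Lemma CS (a b c d : R) : Rabs (a*c + b*d) <= sqrt (a^2+b^2) * sqrt (c^2+d^2).
Proof.
  rewrite <- sqrt_mult by nra.
  rewrite <- sqrt_Rsqr_abs. apply sqrt_le_1_alt. unfold Rsqr.
  assert (0 <= (a*d-b*c)^2) by apply pow2_ge_0.
  assert (E : (a^2+b^2)*(c^2+d^2) - (a*c+b*d)*(a*c+b*d) = (a*d-b*c)^2) by ring. lra.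
Qed.

Lemma S_deriv m s a (u v u1 v1 u2 v2 P : R -> R) t : 0 < t ->
  is_derive u1 t (u2 t) -> is_derive v1 t (v2 t) ->
  u2 t + INR m / t * u1 t - u t - a*(s * v t + t * v1 t) + P t * u t = 0 ->
  v2 t + INR m / t * v1 t - v t + a*(s * u t + t * u1 t) + P t * v t = 0 ->
  is_derive (fun t => sqrt ((t^m*u1 t)^2 + (t^m*v1 t)^2 + 1)) t
    (t^m*t^m*((1-P t)*(u t*u1 t+v t*v1 t) + a*s*(u1 t*v t-u t*v1 t))
      / sqrt ((t^m*u1 t)^2 + (t^m*v1 t)^2 + 1)).
Proof.
  intros Ht Du1 Dv1 E1 E2.
  assert (Hp : 0 < (t^m*u1 t)^2 + (t^m*v1 t)^2 + 1) by nra.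
  auto_derive.
  - repeat split; try (eexists; eassumption). exact Hp.
  - assert (D3: Derive (fun x => u1 x) t = u2 t) by (apply is_derive_unique; exact Du1).
    assert (D4: Derive (fun x => v1 x) t = v2 t) by (apply is_derive_unique; exact Dv1).
    rewrite D3, D4.
    assert (U2 : u2 t = - (INR m / t * u1 t) + u t + a*(s * v t + t * v1 t) - P t * u t) by lra.
    assert (V2 : v2 t = - (INR m / t * v1 t) + v t - a*(s * u t + t * u1 t) - P t * v t) by lra.
    rewrite U2, V2.
    match goal with |- ?A = ?B => change (@eq R A B) end.
    assert (Sq: 0 < sqrt ((t^m*u1 t)^2 + (t^m*v1 t)^2 + 1)) by (apply sqrt_lt_R0; exact Hp).
    set (SQ := sqrt ((t^m*u1 t)^2 + (t^m*v1 t)^2 + 1)) in *.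
    match goal with |- context [sqrt ?X] => replace (sqrt X) with SQ by (unfold SQ; f_equal; ring) end.
    clearbody SQ.
    destruct m as [|k].
    + simpl. field. split; lra.
    + simpl pred. simpl pow. field. split; lra.
Qed.

Lemma S_bound m s a (u v u1 v1 P : R -> R) t : 0 < t -> 0 <= P t -> 0 < a -> 0 < s ->
  Rabs (t^m*t^m*((1-P t)*(u t*u1 t+v t*v1 t) + a*s*(u1 t*v t-u t*v1 t))
      / sqrt ((t^m*u1 t)^2 + (t^m*v1 t)^2 + 1))
  <= t^m * (1 + P t + a*s) * sqrt (u t^2 + v t^2).
Proof.
  intros Ht HP Ha Hs.
  set (X := t^m*u1 t). set (Y := t^m*v1 t).
  assert (Htm : 0 < t^m) by (apply pow_lt; lra).
  assert (Hp : 0 < X^2 + Y^2 + 1) by nra.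
  assert (Sq: 0 < sqrt (X^2 + Y^2 + 1)) by (apply sqrt_lt_R0; exact Hp).
  assert (SXY: sqrt (X^2+Y^2) <= sqrt (X^2 + Y^2 + 1)) by (apply sqrt_le_1_alt; lra).
  assert (E: t^m*t^m*((1-P t)*(u t*u1 t+v t*v1 t) + a*s*(u1 t*v t-u t*v1 t)) =
     t^m*((1-P t)*(u t*X+v t*Y) + a*s*(v t * X + (-u t)*Y))) by (unfold X, Y; ring).
  rewrite E.
  assert (C1 := CS (u t) (v t) X Y).
  assert (C2 := CS (v t) (- u t) X Y).
  replace ((- u t)^2) with (u t ^2) in C2 by ring.
  rewrite (Rplus_comm (v t^2)) in C2.
  set (r := sqrt (u t^2 + v t^2)) in *.
  set (q := sqrt (X^2 + Y^2)) in *.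
  set (SQ := sqrt (X^2 + Y^2 + 1)) in *.
  assert (0 <= r) by apply sqrt_pos. assert (0 <= q) by apply sqrt_pos.
  set (N := (1-P t)*(u t*X+v t*Y) + a*s*(v t * X + (-u t)*Y)).
  assert (K : Rabs N <= (1 + P t + a*s) * r * SQ).
  { unfold N. eapply Rle_trans. apply Rabs_triang.
    rewrite Rabs_mult, Rabs_mult.
    assert (Rabs (1 - P t) <= 1 + P t) by (apply Rabs_le; lra).
    rewrite (Rabs_right (a*s)) by nra.
    assert (Rabs (1 - P t) * Rabs (u t * X + v t * Y) <= (1+P t)*(r*q)).
    { apply Rmult_le_compat; try apply Rabs_pos; lra. }
    assert (a*s*Rabs (v t * X + - u t * Y) <= a*s*(r*q)) by (apply Rmult_le_compat_l; nra).
    assert (r*q <= r * SQ) by (apply Rmult_le_compat_l; lra).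
    assert (0 <= 1 + P t + a*s) by nra.
    assert ((1 + P t + a*s) * (r*q) <= (1 + P t + a*s) * (r * SQ)) by (apply Rmult_le_compat_l; lra).
    nra. }
  unfold Rdiv. rewrite Rabs_mult, Rabs_mult, (Rabs_right (/ _)) by (left; apply Rinv_0_lt_compat; lra).
  rewrite (Rabs_right (t^m)) by lra.
  apply (Rmult_le_reg_r SQ); [lra|].
  replace (t ^ m * Rabs N * / SQ * SQ) with (t^m * Rabs N) by (field; lra).
  replace (t ^ m * (1 + P t + a * s) * r * SQ) with (t^m * ((1 + P t + a * s) * r * SQ)) by ring.
  apply Rmult_le_compat_l; lra.
Qed.
Lemma mono_cmp (f g df dg : R -> R) (a b : R) : a <= b ->
  (forall x, a <= x <= b -> is_derive f x (df x) /\ is_derive g x (dg x) /\ df x <= dg x) ->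
  f b - f a <= g b - g a.
Proof.
  intros Hab H.
  destruct (MVT_gen (fun x => f x - g x) a b (fun x => df x - dg x)) as [c [Hc E]].
  - intros x Hx. rewrite Rmin_left in Hx by lra. rewrite Rmax_right in Hx by lra.
    destruct (H x ltac:(lra)) as [H1 [H2 _]]. apply (is_derive_minus _ _ _ _ _ H1 H2).
  - intros x Hx. rewrite Rmin_left in Hx by lra. rewrite Rmax_right in Hx by lra.
    destruct (H x ltac:(lra)) as [H1 [H2 _]].
    apply continuity_pt_filterlim. apply (ex_derive_continuous (fun x => f x - g x)).
    eexists. apply (is_derive_minus _ _ _ _ _ H1 H2).
  - rewrite Rmin_left in Hc by lra. rewrite Rmax_right in Hc by lra.
    destruct (H c Hc) as [_ [_ Hd]].
    assert ((df c - dg c) * (b - a) <= 0) by (apply Rmult_le_0_r; lra). lra.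
Qed.
Lemma pow_le1 t m : 0 <= t <= 1 -> 0 <= t^m <= 1.
Proof. intros H. induction m; simpl; nra. Qed.
Lemma rp_pos x y : 0 < Rpower x y.
Proof. unfold Rpower. apply exp_pos. Qed.
Lemma rp_small e eps : e < 0 -> 0 < eps -> exists T, 0 < T /\ forall t, T <= t -> Rpower t e < eps.
Proof.
  intros He Heps. exists (exp (ln eps / e + 1)). split; [apply exp_pos|].
  intros t Ht. assert (Tp : 0 < t) by (pose proof (exp_pos (ln eps / e + 1)); lra).
  unfold Rpower. rewrite <- (exp_ln eps) by lra. apply exp_increasing.
  assert (ln (exp (ln eps / e + 1)) <= ln t) by (apply ln_le; [apply exp_pos|lra]).
  rewrite ln_exp in H.
  assert (e * (ln eps / e + 1) = ln eps + e) by (field; lra).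
  assert (e * ln t <= e * (ln eps / e + 1)) by (apply Rmult_le_compat_neg_l; lra).
  lra.
Qed.
Lemma rp_deriv e t : 0 < t -> is_derive (fun x => Rpower x e) t (e * Rpower t (e-1)).
Proof. intros Ht. apply is_derive_Reals. apply derivable_pt_lim_power. exact Ht. Qed.
Lemma rp_le1 t e : 1 <= t -> e <= 0 -> Rpower t e <= 1.
Proof. intros Ht He. rewrite <- (Rpower_O t) by lra. apply Rle_Rpower; lra. Qed.
Lemma rp_inv t e : 0 < t -> Rpower t e * Rpower t (-e) = 1.
Proof. intros Ht. rewrite <- Rpower_plus. replace (e + - e) with 0 by ring. apply Rpower_O; lra. Qed.
Lemma rp_sq t e : Rpower t (2*e) = Rpower t e * Rpower t e.
Proof. rewrite <- Rpower_plus. f_equal; ring. Qed.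
Lemma derive_fst (f : R -> C) x l : is_derive f x l -> is_derive (fun t => fst (f t)) x (fst l).
Proof.
  intros H. unfold is_derive in *.
  apply (filterdiff_comp' f (fun t : C => fst t) x _ (fun t : C => fst t) H).
  apply filterdiff_linear. apply (@is_linear_fst R_AbsRing R_NormedModule R_NormedModule).
Qed.
Lemma derive_snd (f : R -> C) x l : is_derive f x l -> is_derive (fun t => snd (f t)) x (snd l).
Proof.
  intros H. unfold is_derive in *.
  apply (filterdiff_comp' f (fun t : C => snd t) x _ (fun t : C => snd t) H).
  apply filterdiff_linear. apply (@is_linear_snd R_AbsRing R_NormedModule R_NormedModule).
Qed.
Lemma absle x y : Rabs x <= y -> - y <= x <= y.
Proof. unfold Rabs; destruct Rcase_abs; intros; lra. Qed.


Lemma core (m : nat) (s a : R) (u v u1 v1 u2 v2 P : R -> R) (u0 v0 : R) :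
  0 < a -> 0 < s -> s < INR m + 1 -> INR m + 1 < 2*s ->
  (forall t, 0 < t -> is_derive u t (u1 t)) ->
  (forall t, 0 < t -> is_derive v t (v1 t)) ->
  (forall t, 0 < t -> is_derive u1 t (u2 t)) ->
  (forall t, 0 < t -> is_derive v1 t (v2 t)) ->
  (forall t, 0 < t -> u2 t + INR m / t * u1 t - u t - a*(s * v t + t * v1 t) + P t * u t = 0) ->
  (forall t, 0 < t -> v2 t + INR m / t * v1 t - v t + a*(s * u t + t * u1 t) + P t * v t = 0) ->
  (forall t, 0 <= P t) ->
  (forall M, exists K, forall t, 0 < t -> u t ^2 + v t^2 <= M -> P t <= K) ->
  (exists K R1, forall t, R1 < t -> (u t^2 + v t^2) * Rpower t (2*s) <= K) ->
  (forall eta, 0 < eta -> exists delta, 0 < delta /\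
      forall h, 0 < h < delta -> (u h - u0)^2 + (v h - v0)^2 <= (eta*h)^2) ->
  forall t, 0 < t -> u t = 0 /\ v t = 0.
Proof.
  intros Ha Hs Hm1 Hm2 Du Dv Du1 Dv1 E1 E2 HP0 HPb Hinf H0.
  set (H := fun t => t^m*(v1 t*u t - u1 t*v t) + a*(t*t^m)*(u t^2+v t^2)/2).
  set (Sf := fun t => sqrt ((t^m*u1 t)^2 + (t^m*v1 t)^2 + 1)).
  assert (DH : forall t, 0 < t -> is_derive H t (a*((INR m+1)/2 - s)*t^m*(u t^2+v t^2))).
  { intros t Ht. apply H_deriv with u2 v2 P; auto. }
  assert (DS : forall t, 0 < t -> is_derive Sf t
    (t^m*t^m*((1-P t)*(u t*u1 t+v t*v1 t) + a*s*(u1 t*v t-u t*v1 t))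
      / sqrt ((t^m*u1 t)^2 + (t^m*v1 t)^2 + 1))).
  { intros t Ht. apply S_deriv with u2 v2; auto. }
  assert (DSb : forall t, 0 < t ->
    Rabs (t^m*t^m*((1-P t)*(u t*u1 t+v t*v1 t) + a*s*(u1 t*v t-u t*v1 t))
      / sqrt ((t^m*u1 t)^2 + (t^m*v1 t)^2 + 1))
    <= t^m * (1 + P t + a*s) * sqrt (u t^2 + v t^2)).
  { intros t Ht. apply S_bound; auto. }
  assert (Hdec : forall x y, 0 < x <= y -> H y <= H x).
  { intros x y Hxy.
    assert (H y - H x <= (fun _ => 0) y - (fun _ => 0) x).
    { apply (mono_cmp H (fun _ => 0) (fun t => a*((INR m+1)/2 - s)*t^m*(u t^2+v t^2)) (fun _ => 0)).
      lra. intros z Hz. split; [apply DH; lra|]. split; [auto_derive; try tauto; try ring|].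
      assert (0 < z^m) by (apply pow_lt; lra).
      assert (0 <= u z^2 + v z^2) by nra.
      assert (a*((INR m+1)/2 - s) < 0) by nra.
      assert (0 <= z^m*(u z^2+v z^2)) by (apply Rmult_le_pos; lra).
      replace (a * ((INR m + 1) / 2 - s) * z ^ m * (u z ^ 2 + v z ^ 2)) with
        (a*((INR m+1)/2 - s) * (z^m*(u z^2+v z^2))) by ring. nra. }
    simpl in H1. lra. }
  assert (Wb : forall t, 0 < t -> Rabs (t^m*(v1 t*u t - u1 t*v t)) <= sqrt (u t^2 + v t^2) * Sf t).
  { intros t Ht.
    assert (C := CS (u t) (- v t) (t^m*v1 t) (t^m*u1 t)).
    replace (u t * (t^m*v1 t) + - v t * (t^m*u1 t)) with (t^m*(v1 t*u t - u1 t*v t)) in C by ring.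
    replace ((- v t)^2) with (v t^2) in C by ring.
    eapply Rle_trans; [exact C|]. apply Rmult_le_compat_l; [apply sqrt_pos|].
    unfold Sf. apply sqrt_le_1_alt. lra. }
  assert (Hge : forall x, 0 < x -> 0 <= H x).
  { destruct Hinf as [K [R1 HK]].
    set (R2 := Rmax R1 1 + 1).
    assert (R2a : 1 < R2) by (unfold R2; pose proof (Rmax_r R1 1); lra).
    assert (R2b : R1 < R2) by (unfold R2; pose proof (Rmax_l R1 1); lra).
    assert (Kpos : 0 <= K).
    { pose proof (HK R2 R2b). pose proof (rp_pos R2 (2*s)).
      assert (0 <= (u R2^2+v R2^2) * Rpower R2 (2*s)) by (apply Rmult_le_pos; nra). lra. }
    assert (Hr : forall t, R2 <= t -> u t^2+v t^2 <= K * Rpower t (-(2*s))).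
    { intros t Ht. pose proof (HK t ltac:(lra)). pose proof (rp_pos t (-(2*s))).
      pose proof (rp_inv t (2*s) ltac:(lra)) as RI.
      replace (u t^2+v t^2) with ((u t ^ 2 + v t ^ 2) * Rpower t (2 * s) * Rpower t (-(2*s))) by
        (rewrite Rmult_assoc, RI; ring).
      apply Rmult_le_compat_r; lra. }
    assert (HrK : forall t, R2 <= t -> u t^2+v t^2 <= K).
    { intros t Ht. pose proof (Hr t Ht). pose proof (rp_le1 t (-(2*s)) ltac:(lra) ltac:(lra)).
      pose proof (rp_pos t (-(2*s))). nra. }
    destruct (HPb K) as [KP HKP].
    assert (KPnn : 0 <= KP) by (pose proof (HKP R2 ltac:(lra) (HrK R2 ltac:(lra))); pose proof (HP0 R2); lra).
    assert (Hsq : forall t, R2 <= t -> sqrt (u t^2+v t^2) <= sqrt K * Rpower t (-s)).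
    { intros t Ht. rewrite <- (sqrt_square (Rpower t (-s))) by (left; apply rp_pos).
      rewrite <- sqrt_mult by (try lra; pose proof (rp_pos t (-s)); nra).
      apply sqrt_le_1_alt. rewrite <- rp_sq. replace (2 * - s) with (-(2*s)) by ring. apply Hr; lra. }
    set (e := INR m + 1 - s). set (K2 := (1+KP+a*s)*sqrt K).
    assert (epos : 0 < e) by (unfold e; lra).
    assert (K2nn : 0 <= K2) by (unfold K2; apply Rmult_le_pos; [nra|apply sqrt_pos]).
    assert (Sb : forall t, R2 <= t -> Sf t <= Sf R2 + K2/e * Rpower t e).
    { intros t Ht.
      assert (Sf t - Sf R2 <= K2/e*Rpower t e - K2/e*Rpower R2 e).
      { apply (mono_cmp Sf (fun x => K2/e*Rpower x e)
          (fun t => t^m*t^m*((1-P t)*(u t*u1 t+v t*v1 t) + a*s*(u1 t*v t-u t*v1 t))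
             / sqrt ((t^m*u1 t)^2 + (t^m*v1 t)^2 + 1))
          (fun x => K2 * Rpower x (INR m - s))); [lra|].
        intros z Hz. split; [apply DS; lra|]. split.
        - assert (G: is_derive (fun x => K2/e * Rpower x e) z (K2/e * (e * Rpower z (e-1))))
            by (apply is_derive_scal; apply rp_deriv; lra).
          replace (K2/e * (e * Rpower z (e-1))) with (K2 * Rpower z (INR m - s)) in G.
          exact G. replace (e-1) with (INR m - s) by (unfold e; ring). field; lra.
        - eapply Rle_trans; [apply Rle_abs|]. eapply Rle_trans; [apply DSb; lra|].
          assert (zm : z^m = Rpower z (INR m)) by (rewrite Rpower_pow; lra).
          assert (RP : Rpower z (INR m - s) = z^m * Rpower z (-s)) by
            (rewrite zm, <- Rpower_plus; f_equal; ring).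
          rewrite RP. unfold K2.
          assert (0 < z^m) by (apply pow_lt; lra).
          pose proof (HKP z ltac:(lra) (HrK z ltac:(lra))).
          pose proof (Hsq z ltac:(lra)). pose proof (HP0 z).
          assert (0 <= sqrt (u z^2+v z^2)) by apply sqrt_pos.
          assert (0 < Rpower z (-s)) by apply rp_pos.
          assert (0 <= sqrt K) by apply sqrt_pos.
          assert ((1 + P z + a*s) * sqrt (u z^2+v z^2) <= (1+KP+a*s) * (sqrt K * Rpower z (-s))).
          { apply Rmult_le_compat; nra. }
          replace (z ^ m * (1 + P z + a * s) * sqrt (u z ^ 2 + v z ^ 2)) with
            (z^m * ((1 + P z + a * s) * sqrt (u z ^ 2 + v z ^ 2))) by ring.
          replace ((1 + KP + a * s) * sqrt K * (z ^ m * Rpower z (- s))) with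
            (z^m * ((1+KP+a*s) * (sqrt K * Rpower z (-s)))) by ring.
          apply Rmult_le_compat_l; lra. }
      assert (0 <= K2/e*Rpower R2 e) by (apply Rmult_le_pos; [unfold Rdiv; apply Rmult_le_pos; [lra|left; apply Rinv_0_lt_compat; lra]| left; apply rp_pos]).
      lra. }
    set (A1 := sqrt K * Sf R2). set (A2 := sqrt K * (K2/e) + a*K/2).
    assert (A1nn : 0 <= A1) by (unfold A1; apply Rmult_le_pos; [apply sqrt_pos|]; unfold Sf; apply sqrt_pos).
    assert (A2nn : 0 <= A2).
    { unfold A2. assert (0 <= K2/e) by (unfold Rdiv; apply Rmult_le_pos; [lra|left; apply Rinv_0_lt_compat; lra]).
      pose proof (sqrt_pos K). nra. }
    assert (Hb : forall t, R2 <= t -> Rabs (H t) <= A1 * Rpower t (-s) + A2 * Rpower t (e - s)).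
    { intros t Ht. unfold H. eapply Rle_trans; [apply Rabs_triang|].
      pose proof (Wb t ltac:(lra)).
      assert (T2 : Rabs (a * (t * t ^ m) * (u t ^ 2 + v t ^ 2) / 2) <= a*K/2 * Rpower t (e - s)).
      { assert (tm : t * t^m = Rpower t (INR m + 1)) by
          (rewrite <- S_INR, Rpower_pow by lra; reflexivity).
        assert (RP : Rpower t (e - s) = Rpower t (INR m + 1) * Rpower t (-(2*s))) by
          (rewrite <- Rpower_plus; f_equal; unfold e; ring).
        rewrite RP, <- tm.
        assert (0 < t*t^m) by (pose proof (pow_lt t m ltac:(lra)); nra).
        rewrite Rabs_right by (apply Rle_ge; unfold Rdiv; apply Rmult_le_pos; [|lra];
           apply Rmult_le_pos; nra).
        pose proof (Hr t Ht).
        assert (a*(t*t^m)*(u t^2+v t^2) <= a*(t*t^m)*(K*Rpower t (-(2*s)))) by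
          (apply Rmult_le_compat_l; nra).
        lra. }
      assert (T1 : sqrt (u t^2+v t^2) * Sf t <= A1 * Rpower t (-s) + sqrt K * (K2/e) * Rpower t (e - s)).
      { pose proof (Hsq t Ht). pose proof (Sb t Ht).
        assert (0 <= Sf t) by (unfold Sf; apply sqrt_pos).
        assert (0 <= sqrt (u t^2+v t^2)) by apply sqrt_pos.
        eapply Rle_trans. apply Rmult_le_compat; eauto.
        assert (Rpower t (-s) * Rpower t e = Rpower t (e - s)) by
          (rewrite <- Rpower_plus; f_equal; ring).
        unfold A1. nra. }
      unfold A2. lra. }
    intros x Hx. destruct (Rle_or_lt 0 (H x)) as [|Hlt]; [assumption|exfalso].
    set (eps := - H x).
    destruct (rp_small (-s) (eps/(2*(A1+1))) ltac:(lra)) as [T1 [T1p HT1]].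
    { apply Rdiv_lt_0_compat; unfold eps; lra. }
    destruct (rp_small (e-s) (eps/(2*(A2+1))) ltac:(unfold e; lra)) as [T2 [T2p HT2]].
    { apply Rdiv_lt_0_compat; unfold eps; lra. }
    set (t := Rmax (Rmax T1 T2) (Rmax R2 x)).
    assert (tT1 : T1 <= t) by (unfold t; eapply Rle_trans; [apply Rmax_l|apply Rmax_l]).
    assert (tT2 : T2 <= t) by (unfold t; eapply Rle_trans; [apply Rmax_r|apply Rmax_l]).
    assert (tR2 : R2 <= t) by (unfold t; eapply Rle_trans; [apply Rmax_l|apply Rmax_r]).
    assert (tx : x <= t) by (unfold t; eapply Rle_trans; [apply Rmax_r|apply Rmax_r]).
    pose proof (Hdec x t ltac:(lra)).
    pose proof (Hb t tR2).
    pose proof (HT1 t tT1). pose proof (HT2 t tT2).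
    pose proof (rp_pos t (-s)). pose proof (rp_pos t (e-s)).
    assert (A1 * Rpower t (-s) < eps/2).
    { assert (A1 * Rpower t (-s) <= (A1+1) * Rpower t (-s)) by nra.
      assert (Q7 : (A1+1) * Rpower t (-s) < (A1+1) * (eps / (2 * (A1 + 1)))) by (apply Rmult_lt_compat_l; lra).
      replace ((A1+1) * (eps / (2 * (A1 + 1)))) with (eps/2) in Q7 by (field; lra). lra. }
    assert (A2 * Rpower t (e-s) <= eps/2).
    { assert (A2 * Rpower t (e-s) <= (A2+1) * Rpower t (e-s)) by nra.
      assert (Q9 : (A2+1) * Rpower t (e-s) <= (A2+1) * (eps / (2 * (A2 + 1)))) by (apply Rmult_le_compat_l; lra).
      replace ((A2+1) * (eps / (2 * (A2 + 1)))) with (eps/2) in Q9 by (field; lra). lra. }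
    assert (Q8 : Rabs (H t) < eps) by lra.
    apply Rabs_def2 in Q8. unfold eps in *. lra. }
  destruct (H0 1 Rlt_0_1) as [d1' [d1p Hd1]].
  set (d1 := Rmin (d1'/2) 1).
  assert (d1a : 0 < d1) by (unfold d1; apply Rmin_glb_lt; lra).
  assert (d1b : d1 <= 1) by (unfold d1; apply Rmin_r).
  assert (d1c : d1 < d1') by (unfold d1; pose proof (Rmin_l (d1'/2) 1); lra).
  set (M := 2*(u0^2+v0^2)+2).
  assert (Mpos : 0 < M) by (unfold M; nra).
  assert (HM : forall t, 0 < t <= d1 -> u t^2 + v t^2 <= M).
  { intros t Ht. pose proof (Hd1 t ltac:(lra)).
    assert ((1*t)^2 <= 1) by nra.
    assert (0 <= (u t - 2*u0)^2) by apply pow2_ge_0.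
    assert (0 <= (v t - 2*v0)^2) by apply pow2_ge_0.
    assert (0 <= (u t - u0)^2) by apply pow2_ge_0.
    assert (0 <= (v t - v0)^2) by apply pow2_ge_0.
    unfold M. nra. }
  destruct (HPb M) as [KP0 HKP0].
  assert (KP0nn : 0 <= KP0) by (pose proof (HKP0 d1 d1a (HM d1 ltac:(lra))); pose proof (HP0 d1); lra).
  set (K3 := (1+KP0+a*s)*sqrt M).
  assert (K3nn : 0 <= K3) by (unfold K3; apply Rmult_le_pos; [nra|apply sqrt_pos]).
  assert (HB : forall t, 0 < t <= d1 -> Sf t <= Sf d1 + K3).
  { intros t Ht.
    assert ((fun x => -K3*x) d1 - (fun x => -K3*x) t <= Sf d1 - Sf t).
    { apply (mono_cmp (fun x => -K3*x) Sf (fun _ => -K3)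
          (fun t => t^m*t^m*((1-P t)*(u t*u1 t+v t*v1 t) + a*s*(u1 t*v t-u t*v1 t))
             / sqrt ((t^m*u1 t)^2 + (t^m*v1 t)^2 + 1))); [lra|].
      intros z Hz. split; [auto_derive; try tauto; ring|]. split; [apply DS; lra|].
      assert (Q1 := DSb z ltac:(lra)).
      apply absle in Q1.
      pose proof (pow_le1 z m ltac:(lra)).
      pose proof (HKP0 z ltac:(lra) (HM z ltac:(lra))). pose proof (HP0 z).
      assert (sqrt (u z^2+v z^2) <= sqrt M) by (apply sqrt_le_1_alt; apply HM; lra).
      assert (0 <= sqrt (u z^2+v z^2)) by apply sqrt_pos.
      assert ((1 + P z + a*s) * sqrt (u z^2+v z^2) <= K3) by (unfold K3; apply Rmult_le_compat; nra).
      assert (0 <= (1 + P z + a*s) * sqrt (u z^2+v z^2)) by (apply Rmult_le_pos; nra).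
      assert (z ^ m * (1 + P z + a * s) * sqrt (u z ^ 2 + v z ^ 2) <= K3).
      { replace (z ^ m * (1 + P z + a * s) * sqrt (u z ^ 2 + v z ^ 2)) with
          (z ^ m * ((1 + P z + a * s) * sqrt (u z ^ 2 + v z ^ 2))) by ring. nra. }
      lra. }
    simpl in H1. nra. }
  set (B := Sf d1 + K3).
  assert (Bnn : 0 <= B) by (unfold B, Sf; pose proof (sqrt_pos ((d1 ^ m * u1 d1) ^ 2 + (d1 ^ m * v1 d1) ^ 2 + 1)); lra).
  assert (HB' : forall t, 0 < t <= d1 -> sqrt ((t^m*v1 t)^2 + (- (t^m*u1 t))^2) <= B).
  { intros t Ht. eapply Rle_trans; [|apply HB; exact Ht]. unfold Sf. apply sqrt_le_1_alt. nra. }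
  assert (Hle : forall R0, 0 < R0 -> H R0 <= 0).
  { intros R0 HR0. destruct (Rle_or_lt (H R0) 0) as [|Hh0]; [assumption|exfalso].
    set (h0 := H R0) in *.
    set (c0 := sqrt (u0^2 + v0^2)).
    assert (c0nn : 0 <= c0) by apply sqrt_pos.
    set (eta := h0/(4*(B+1)*(c0+1))).
    assert (etap : 0 < eta) by (unfold eta; apply Rdiv_lt_0_compat; nra).
    assert (etaB : B * eta <= h0/4).
    { unfold eta. replace (B * (h0 / (4 * (B + 1) * (c0 + 1)))) with ((h0/4) * (B / ((B+1)*(c0+1)))) by (field; lra).
      assert (B / ((B+1)*(c0+1)) <= 1) by (apply Rle_div_l; nra). nra. }
    assert (etac : c0 * eta <= h0/4).
    { unfold eta. replace (c0 * (h0 / (4 * (B + 1) * (c0 + 1)))) with ((h0/4) * (c0 / ((B+1)*(c0+1)))) by (field; lra).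
      assert (c0 / ((B+1)*(c0+1)) <= 1) by (apply Rle_div_l; nra). nra. }
    destruct (H0 eta etap) as [d2' [d2p Hd2]].
    set (d2 := Rmin (Rmin d1 R0) (Rmin (h0/(2*a*M)) (d2'/2))).
    assert (Q1 : 0 < h0/(2*a*M)) by (apply Rdiv_lt_0_compat; nra).
    assert (d2a : 0 < d2) by (unfold d2; repeat apply Rmin_glb_lt; lra).
    assert (d2b : d2 <= d1) by (unfold d2; eapply Rle_trans; apply Rmin_l).
    assert (d2c : d2 <= R0) by (unfold d2; eapply Rle_trans; [apply Rmin_l|apply Rmin_r]).
    assert (d2d : d2 <= h0/(2*a*M)) by (unfold d2; eapply Rle_trans; [apply Rmin_r|apply Rmin_l]).
    assert (d2e : d2 < d2') by (unfold d2; pose proof (Rmin_r (Rmin d1 R0) (Rmin (h0/(2*a*M)) (d2'/2)));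
       pose proof (Rmin_r (h0/(2*a*M)) (d2'/2)); lra).
    assert (Key : forall t, 0 < t <= d2 -> h0/2 <= v1 t*u0 - u1 t*v0).
    { intros t Ht.
      pose proof (Hdec t R0 ltac:(lra)) as Hh.
      pose proof (pow_le1 t m ltac:(lra)) as Htm.
      assert (tm : 0 < t^m) by (apply pow_lt; lra).
      pose proof (HM t ltac:(lra)) as HMt.
      assert (S2 : a*(t*t^m)*(u t^2+v t^2)/2 <= h0/4).
      { assert (t*t^m*(u t^2+v t^2) <= t*M).
        { assert (0 <= u t^2+v t^2) by nra.
          assert (t^m*(u t^2+v t^2) <= M) by nra. nra. }
        assert (a*t*M <= h0/2).
        { assert (t*(2*a*M) <= h0) by (apply (Rmult_le_reg_r (/(2*a*M))); [apply Rinv_0_lt_compat; nra|];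
            replace (t * (2 * a * M) * / (2 * a * M)) with t by (field; nra); unfold Rdiv in d2d; lra). nra. }
        nra. }
      assert (Cr : Rabs ((t^m*v1 t)*(u t - u0) + (-(t^m*u1 t))*(v t - v0)) <= h0/4).
      { eapply Rle_trans. apply CS.
        pose proof (Hd2 t ltac:(lra)) as Hq.
        assert (sqrt ((u t - u0)^2 + (v t - v0)^2) <= eta * t).
        { rewrite <- (sqrt_pow2 (eta*t)) by nra. apply sqrt_le_1_alt. exact Hq. }
        pose proof (HB' t ltac:(lra)).
        pose proof (sqrt_pos ((u t - u0)^2 + (v t - v0)^2)).
        pose proof (sqrt_pos ((t ^ m * v1 t) ^ 2 + (- (t ^ m * u1 t)) ^ 2)).
        assert (eta * t <= eta) by nra.
        assert (sqrt ((t ^ m * v1 t) ^ 2 + (- (t ^ m * u1 t)) ^ 2) * sqrt ((u t - u0)^2 + (v t - v0)^2) <= B * eta)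
          by (apply Rmult_le_compat; lra).
        lra. }
      apply absle in Cr.
      assert (E : t^m*(v1 t*u t - u1 t*v t) = t^m*(v1 t*u0 - u1 t*v0) + ((t^m*v1 t)*(u t - u0) + (-(t^m*u1 t))*(v t - v0))) by ring.
      change (h0 <= H t) in Hh. unfold H in Hh. rewrite E in Hh.
      assert (h0/2 <= t^m*(v1 t*u0 - u1 t*v0)) by lra.
      nra. }
    set (phi := fun x => v x * u0 - u x * v0).
    assert (Hphi : forall x, 0 < x < d2' -> Rabs (phi x) <= h0/4 * x).
    { intros x Hx. unfold phi.
      replace (v x * u0 - u x * v0) with (u0*(v x - v0) + (-v0)*(u x - u0)) by ring.
      eapply Rle_trans. apply CS.
      replace ((-v0)^2) with (v0^2) by ring.
      pose proof (Hd2 x Hx) as Hq.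
      assert (sqrt ((v x - v0)^2 + (u x - u0)^2) <= eta * x).
      { rewrite <- (sqrt_pow2 (eta*x)) by nra. apply sqrt_le_1_alt. lra. }
      pose proof (sqrt_pos ((v x - v0)^2 + (u x - u0)^2)).
      fold c0.
      assert (c0 * sqrt ((v x - v0)^2 + (u x - u0)^2) <= c0 * (eta * x)) by (apply Rmult_le_compat_l; lra).
      nra. }
    assert (Mo : (fun x => h0/2*x) d2 - (fun x => h0/2*x) (d2/4) <= phi d2 - phi (d2/4)).
    { apply (mono_cmp (fun x => h0/2*x) phi (fun _ => h0/2) (fun x => v1 x*u0 - u1 x*v0)); [lra|].
      intros z Hz. split; [auto_derive; try tauto; ring|]. split.
      - unfold phi. assert (Du' := Du z ltac:(lra)). assert (Dv' := Dv z ltac:(lra)).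
        auto_derive.
        + repeat split; eexists; eassumption.
        + assert (D1: Derive (fun x => u x) z = u1 z) by (apply is_derive_unique; exact Du').
          assert (D2: Derive (fun x => v x) z = v1 z) by (apply is_derive_unique; exact Dv').
          rewrite D1, D2. ring.
      - apply Key; lra. }
    simpl in Mo.
    pose proof (Hphi d2 ltac:(lra)). pose proof (Hphi (d2/4) ltac:(lra)).
    apply absle in H1. apply absle in H2.
    assert (0 < h0 * d2) by nra. nra. }
  assert (Hz : forall y, 0 < y -> H y = 0).
  { intros y Hy. pose proof (Hge y Hy). pose proof (Hle y Hy). lra. }
  intros t Ht.
  assert (t2 : 0 < t/2) by lra.
  assert (Dz : is_derive (fun _ : R => 0) t (a*((INR m+1)/2 - s)*t^m*(u t^2+v t^2))).
  { apply (is_derive_ext_loc H).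
    - exists (mkposreal (t/2) t2). intros y Hy.
      change (Rabs (y - t) < t/2) in Hy. apply Rabs_def2 in Hy.
      apply Hz. lra.
    - apply DH; lra. }
  apply is_derive_unique in Dz. rewrite Derive_const in Dz.
  assert (tm : 0 < t^m) by (apply pow_lt; lra).
  assert (co : a*((INR m+1)/2 - s) < 0) by nra.
  assert (r0 : u t^2 + v t^2 = 0).
  { assert (a*((INR m+1)/2 - s) * t^m <> 0) by nra.
    apply (Rmult_eq_reg_l (a*((INR m+1)/2 - s) * t^m)); [|assumption]. lra. }
  split; nra.
Qed.


Theorem lemma5 (d : nat) (sigma a : R) (Q Q' Q'' : R -> C) :
  (1 <= d)%nat -> 0 < sigma -> 1 < sigma * INR d -> sigma * INR d < 2 -> 0 < a ->
  (forall rho, 0 < rho -> is_derive Q rho (Q' rho)) ->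
  (forall rho, 0 < rho -> is_derive Q' rho (Q'' rho)) ->
  (forall rho, 0 < rho ->
     Cplus (Cplus (Cplus (Cplus (Q'' rho)
             (Cmult (RtoC ((INR d - 1) / rho)) (Q' rho)))
             (Copp (Q rho)))
             (Cmult (Cmult Ci (RtoC a))
                    (Cplus (Cmult (RtoC (1 / sigma)) (Q rho))
                           (Cmult (RtoC rho) (Q' rho)))))
           (Cmult (RtoC (abs_pow (Q rho) sigma)) (Q rho)) = RtoC 0) ->
  filterlim (fun h => Cmult (RtoC (/ h)) (Cminus (Q h) (Q 0)))
            (at_right 0) (locally (RtoC 0)) ->
  (exists c1 : C,
     filterlim (fun rho => Cmult (Q rho) (inv_Q1 a sigma rho))
               (Rbar_locally p_infty) (locally c1)) ->
  forall rho, 0 <= rho -> Q rho = RtoC 0.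
Proof.
  intros Hd Hsig Hd1 Hd2 Ha DQ DQ' ODE Hzero Hinf.
  destruct d as [|m]; [lia|]. rewrite S_INR in Hd1, Hd2, ODE.
  set (s := 1/sigma).
  assert (Hs : 0 < s) by (unfold s; apply Rdiv_lt_0_compat; lra).
  assert (Hm1 : s < INR m + 1).
  { unfold s. apply (Rmult_lt_reg_l sigma); [lra|]. field_simplify; lra. }
  assert (Hm2 : INR m + 1 < 2*s).
  { unfold s. apply (Rmult_lt_reg_l sigma); [lra|]. field_simplify; lra. }
  assert (E1 : forall t, 0 < t -> fst (Q'' t) + INR m / t * fst (Q' t) - fst (Q t)
      - a*(s * snd (Q t) + t * snd (Q' t)) + abs_pow (Q t) sigma * fst (Q t) = 0).
  { intros t Ht. pose proof (ODE t Ht) as E. apply (f_equal fst) in E. simpl in E. unfold s. lra. }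
  assert (E2 : forall t, 0 < t -> snd (Q'' t) + INR m / t * snd (Q' t) - snd (Q t)
      + a*(s * fst (Q t) + t * fst (Q' t)) + abs_pow (Q t) sigma * snd (Q t) = 0).
  { intros t Ht. pose proof (ODE t Ht) as E. apply (f_equal snd) in E. simpl in E. unfold s. lra. }
  assert (HP0 : forall t, 0 <= abs_pow (Q t) sigma).
  { intros t. unfold abs_pow, rpow_nn. destruct Rlt_dec; [left; apply rp_pos|lra]. }
  assert (HPb : forall M, exists K, forall t, 0 < t -> fst (Q t) ^2 + snd (Q t)^2 <= M -> abs_pow (Q t) sigma <= K).
  { intros M. exists (Rpower (sqrt (Rabs M) + 1) (2*sigma)). intros t Ht HM.
    unfold abs_pow, rpow_nn. destruct Rlt_dec as [Hc|Hc]; [|left; apply rp_pos].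
    apply Rle_Rpower_l; [lra|]. split; [exact Hc|].
    unfold Cmod. assert (sqrt (fst (Q t) ^ 2 + snd (Q t) ^ 2) <= sqrt (Rabs M)).
    { apply sqrt_le_1_alt. pose proof (Rle_abs M). lra. }
    lra. }
  assert (Hinf' : exists K R1, forall t, R1 < t -> (fst (Q t)^2 + snd (Q t)^2) * Rpower t (2*s) <= K).
  { destruct Hinf as [c1 Hc1].
    apply filterlim_locally with (eps := mkposreal 1 Rlt_0_1) in Hc1.
    destruct Hc1 as [M HM].
    exists ((Cmod c1 + sqrt 2)^2), (Rmax M 0). intros t Ht.
    assert (tp : 0 < t) by (pose proof (Rmax_r M 0); lra).
    assert (B := HM t ltac:(pose proof (Rmax_l M 0); lra)).
    apply C_NormedModule_mixin_compat2 in B. simpl in B.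
    change (minus (Q t * inv_Q1 a sigma t)%C c1) with (Cminus (Q t * inv_Q1 a sigma t)%C c1) in B.
    assert (B2 : Cmod (Q t * inv_Q1 a sigma t)%C <= Cmod c1 + sqrt 2).
    { replace (Q t * inv_Q1 a sigma t)%C with (Cplus (Cminus (Q t * inv_Q1 a sigma t)%C c1) c1) by ring.
      eapply Rle_trans; [apply Cmod_triangle|]. lra. }
    assert (CI : Cmod (inv_Q1 a sigma t) = Rpower t s).
    { unfold inv_Q1. rewrite Cmod_mult, Cmod_R, Rabs_right by (left; apply rp_pos).
      unfold Cmod. simpl.
      replace (cos (ln t / a) * (cos (ln t / a) * 1) + sin (ln t / a) * (sin (ln t / a) * 1)) with 1
        by (pose proof (sin2_cos2 (ln t / a)) as SC; unfold Rsqr in SC; lra).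
      rewrite sqrt_1. unfold s. ring. }
    rewrite Cmod_mult, CI in B2.
    assert (CQ : Cmod (Q t) ^2 = fst (Q t)^2 + snd (Q t)^2).
    { unfold Cmod. rewrite pow2_sqrt; [reflexivity|]. nra. }
    rewrite <- CQ, rp_sq.
    assert (0 <= Cmod (Q t) * Rpower t s) by (apply Rmult_le_pos; [apply Cmod_ge_0|left; apply rp_pos]).
    replace (Cmod (Q t) ^ 2 * (Rpower t s * Rpower t s)) with ((Cmod (Q t) * Rpower t s)^2) by ring.
    apply pow_incr. lra. }
  assert (H0' : forall eta, 0 < eta -> exists delta, 0 < delta /\ forall h, 0 < h < delta -> (fst (Q h) - fst (Q 0))^2 + (snd (Q h) - snd (Q 0))^2 <= (eta*h)^2).
  { intros eta Heta.
    assert (Hz := Hzero). 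
    apply filterlim_locally with (eps := mkposreal (eta/2) ltac:(lra)) in Hz.
    destruct Hz as [del Hdel].
    exists del. split; [apply cond_pos|]. intros h Hh.
    assert (B : ball 0 del h).
    { change (Rabs (h - 0) < del). rewrite Rminus_0_r, Rabs_right by lra. lra. }
    assert (B' := Hdel h B ltac:(lra)).
    apply C_NormedModule_mixin_compat2 in B'. simpl in B'.
    change (minus (RtoC (/ h) * Cminus (Q h) (Q 0))%C (RtoC 0)) with
      (Cminus (RtoC (/ h) * Cminus (Q h) (Q 0))%C (RtoC 0)) in B'.
    replace (Cminus (RtoC (/ h) * Cminus (Q h) (Q 0))%C (RtoC 0)) with (RtoC (/ h) * Cminus (Q h) (Q 0))%C in B' by ring.
    rewrite Cmod_mult, Cmod_R, Rabs_right in B' by (left; apply Rinv_0_lt_compat; lra).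
    assert (s2 : sqrt 2 < 2).
    { apply (Rlt_le_trans _ (sqrt (2*2))). apply sqrt_lt_1_alt; lra. rewrite sqrt_square; lra. }
    assert (Cmod (Cminus (Q h) (Q 0)) <= eta * h).
    { assert (Cmod (Cminus (Q h) (Q 0)) < sqrt 2 * (eta/2) * h).
      { apply (Rmult_lt_reg_l (/h)); [apply Rinv_0_lt_compat; lra|].
        replace (/ h * (sqrt 2 * (eta / 2) * h)) with (sqrt 2 * (eta/2)) by (field; lra). exact B'. }
      assert (sqrt 2 * (eta/2) <= eta) by nra. assert (sqrt 2 * (eta/2) * h <= eta * h) by (apply Rmult_le_compat_r; lra). lra. }
    assert (CQ : Cmod (Cminus (Q h) (Q 0)) ^2 = (fst (Q h) - fst (Q 0))^2 + (snd (Q h) - snd (Q 0))^2).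
    { unfold Cmod. rewrite pow2_sqrt; [simpl; ring|]. nra. }
    rewrite <- CQ. apply pow_incr. split; [apply Cmod_ge_0|assumption]. }
  assert (CR := core m s a (fun t => fst (Q t)) (fun t => snd (Q t)) (fun t => fst (Q' t))
     (fun t => snd (Q' t)) (fun t => fst (Q'' t)) (fun t => snd (Q'' t))
     (fun t => abs_pow (Q t) sigma) (fst (Q 0)) (snd (Q 0)) Ha Hs Hm1 Hm2
     (fun t Ht => derive_fst Q t _ (DQ t Ht)) (fun t Ht => derive_snd Q t _ (DQ t Ht))
     (fun t Ht => derive_fst Q' t _ (DQ' t Ht)) (fun t Ht => derive_snd Q' t _ (DQ' t Ht))
     E1 E2 HP0 HPb Hinf' H0').
  assert (Hpos : forall t, 0 < t -> Q t = RtoC 0).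
  { intros t Ht. destruct (CR t Ht) as [A B]. simpl in A, B.
    rewrite (surjective_pairing (Q t)), A, B. reflexivity. }
  intros rho Hrho. destruct Hrho as [Hr|Hr]; [apply Hpos; exact Hr|]. subst rho.
  destruct (H0' 1 Rlt_0_1) as [del [Hdel Hd0]].
  set (r := fst (Q 0)^2 + snd (Q 0)^2).
  assert (r0 : r <= 0).
  { destruct (Rle_or_lt r 0) as [|rp]; [assumption|exfalso].
    set (h := Rmin (del/2) (Rmin (r/2) (1/2))).
    assert (h1 : 0 < h) by (unfold h; repeat apply Rmin_glb_lt; lra).
    assert (h2 : h < del) by (unfold h; pose proof (Rmin_l (del/2) (Rmin (r/2) (1/2))); lra).
    assert (h3 : h <= r/2) by (unfold h; eapply Rle_trans; [apply Rmin_r|apply Rmin_l]).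
    assert (h4 : h <= 1/2) by (unfold h; eapply Rle_trans; [apply Rmin_r|apply Rmin_r]).
    pose proof (Hd0 h ltac:(lra)) as Q1. rewrite (Hpos h h1) in Q1. simpl in Q1.
    assert (h*h <= r/4) by nra. assert (r <= h*h) by (unfold r; nra). lra. }
  assert (fst (Q 0) = 0 /\ snd (Q 0) = 0) by (unfold r in r0; split; nra).
  destruct H as [A B]. rewrite (surjective_pairing (Q 0)), A, B. reflexivity.
Qed.
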